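(* Let $q=\{q_n\}_{n\geq1}$ be a system of Beurling primes with $\sigma_c(\zeta_q)<\infty$. Then for almost every $x\in\mathbb{R}$, $$\mu_q(x)\leq 2\sigma_c(\zeta_q).$$
   Context: A system of Beurling primes is an increasing sequence $q=\{q_n\}$ of real numbers with $1<q_n\to\infty$ such that $\{\log q_n\}$ is linearly independent over $\mathbb{Q}$; its Beurling integers $\{\nu_n\}_{n\geq1}$ are all finite products of elements of $q$ (including $1$), listed increasingly. $\zeta_q(s)=\sum_n\nu_n^{-s}$ and $\sigma_c(\zeta_q)$ is its abscissa of convergence. For $x\in\mathbb{R}$, the $q$-irrationality measure $\mu_q(x)$ is the infimum of the set of $r>0$ such that $|x-\nu_m/\nu_n|<\nu_n^{-r}$ holds for at most finitely many pairs $(m,n)\in\mathbb{N}\times\mathbb{N}$. *)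

(* Defs.v *)
From HB Require Import structures.
From mathcomp Require Import all_boot all_order all_algebra.
From mathcomp Require Import all_classical all_reals all_analysis.
Set Implicit Arguments. Unset Strict Implicit. Unset Printing Implicit Defensive.
Import Order.TTheory GRing.Theory Num.Theory.
Import numFieldNormedType.Exports.
Local Open Scope classical_set_scope.
Local Open Scope ring_scope.

Definition is_beurling_primes (R : realType) (q : nat -> R) : Prop :=
  [/\ {homo q : m n / (m < n)%N >-> m < n},
      (forall n, 1 < q n),
      q n @[n --> \oo] --> +oo &
      (forall (n : nat) (c : 'I_n -> rat),
          \sum_(i < n) ratr (c i) * ln (q i) = 0 -> forall i, c i = 0)].

Definition beurling_integers (R : realType) (q : nat -> R) : set R :=
  [set y | exists (n : nat) (e : 'I_n -> nat), y = \prod_(i < n) q i ^+ e i].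

Definition lists_increasingly (R : realType) (nu : nat -> R) (B : set R) : Prop :=
  {homo nu : m n / (m < n)%N >-> m < n} /\ range nu = B.

Definition abscissa_conv (R : realType) (nu : nat -> R) : \bar R :=
  ereal_inf [set s%:E | s in [set s : R | cvgn (series (fun n => nu n `^ (- s)))]].

Definition q_irr_measure (R : realType) (nu : nat -> R) (x : R) : \bar R :=
  ereal_inf [set r%:E | r in [set r : R | 0 < r /\
     finite_set [set mn : nat * nat |
        `|x - nu mn.1 / nu mn.2| < nu mn.2 `^ (- r)]]].

(* Main.v *)
Require Import Defs.
From HB Require Import structures.
From mathcomp Require Import all_boot all_order all_algebra.
From mathcomp Require Import all_classical all_reals all_analysis.
From mathcomp Require Import ring lra.
Import Order.TTheory GRing.Theory Num.Theory.
Import numFieldNormedType.Exports.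
Local Open Scope classical_set_scope.
Local Open Scope ring_scope.

Lemma nu_ge1 (R : realType) (q nu : nat -> R) :
  is_beurling_primes q -> lists_increasingly nu (beurling_integers q) ->
  forall n, 1 <= nu n.
Proof.
move=> [_ q1 _ _] [_ rg] n.
have : beurling_integers q (nu n) by rewrite -rg; exists n.
move=> [k [e ->]]; apply: (big_ind (fun x => 1 <= x)) => //; [by move=> x y; apply: mulr_ege1| move=> i _].
by apply: exprn_ege1; apply: ltW.
Qed.

Lemma nu_unbounded (R : realType) (q nu : nat -> R) :
  is_beurling_primes q -> lists_increasingly nu (beurling_integers q) ->
  forall Y, exists j, forall m, (j <= m)%N -> Y < nu m.
Proof.
move=> [_ q1 qoo _] [nuh rg] Y.
have [N _ HN] := (@cvgryPgt _ _ _ _ q).1 qoo Y.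
have YqN := HN N (leqnn N).
have : beurling_integers q (q N).
  exists N.+1, (fun i : 'I_N.+1 => (i == N :> nat) : nat).
  rewrite big_ord_recr /= eqxx expr1 big1 ?mul1r // => i _.
  by rewrite /= ltn_eqF.
rewrite -rg => -[j _ nuj]; exists j => m jm.
rewrite (lt_le_trans YqN) // -nuj.
move: jm; rewrite leq_eqVlt => /orP[/eqP -> //|/nuh /ltW //].
Qed.

Section core.
Variables (R : realType) (nu : nat -> R).
Hypothesis hnu1 : forall n, 1 <= nu n.
Hypothesis hinc : {homo nu : m n / (m < n)%N >-> m < n}.
Hypothesis hunb : forall Y, exists j, forall m, (j <= m)%N -> Y < nu m.

Lemma nu_gt0 n : 0 < nu n.
Proof. exact: lt_le_trans (hnu1 n). Qed.

Lemma powR_le1 n r : 0 <= r -> nu n `^ (- r) <= 1.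
Proof.
move=> r0; rewrite -(powRr0 (nu n)); apply: ler_powR => //.
by rewrite oppr_le0.
Qed.

Lemma near_bound (N : R) (r x : R) m n : 0 <= r -> `|x| <= N ->
  `|x - nu m / nu n| < nu n `^ (- r) -> nu m < (N + 1) * nu n.
Proof.
move=> r0 xN h; have h1 := lt_le_trans h (powR_le1 n r r0).
rewrite -ltr_pdivrMr ?nu_gt0 //.
move: xN h1; rewrite ler_norml ltr_distlC => /andP[? ?] /andP[? ?].
lra.
Qed.


Definition pairs (r x : R) := [set mn : nat * nat |
  `|x - nu mn.1 / nu mn.2| < nu mn.2 `^ (- r)].

Lemma Jbound (N : nat) (r s : R) n m : 0 < s -> 2 * s < r ->
  (lebesgue_measure ([set` `[(- N%:R), N%:R]%R] `&`
        ball (nu m / nu n)%R (nu n `^ (- r))%R) <=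
   ((2 * (N%:R + 1) `^ s * nu n `^ (s - r)) * nu m `^ (- s))%R%:E)%E.
Proof.
move=> s0 srs.
have r0 : 0 <= r by lra.
have Ms0 : 0 <= (N%:R + 1 : R) by rewrite addr_ge0.
case: (ltP (nu m) ((N%:R + 1) * nu n)) => hm; last first.
  rewrite (_ : _ `&` _ = set0) ?measure0.
    by rewrite lee_fin !mulr_ge0 ?powR_ge0.
  apply/seteqP; split => // x [/= xi xb]; exfalso.
  have : nu m < (N%:R + 1) * nu n.
    apply: (@near_bound N%:R r x) => //.
      by rewrite ler_norml; move: xi; rewrite in_itv.
    by rewrite distrC.
  by rewrite ltNge hm.
apply: (le_trans (le_measure _ _ _ (@subIsetr _ _ _))); rewrite ?inE //.
- by apply: measurableI => //; apply: measurable_realfun.measurable_ball.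
- by apply: measurable_realfun.measurable_ball.
have E0 : 0 <= nu n `^ (- r) by apply: powR_ge0.
have hb := lebesgue_measure_ball (nu m / nu n) E0.
apply: (@le_trans _ _ ((nu n `^ (- r)) *+ 2)%:E).
  by rewrite le_eqVlt; apply/orP; left; apply/eqP; exact: hb.
rewrite lee_fin.
rewrite powRD ?(gt_eqF (nu_gt0 n)) ?implybT //.
rewrite powRN.
have Y0 : 0 < nu m `^ s by rewrite powR_gt0 ?nu_gt0.
have YX : nu m `^ s <= (N%:R + 1) `^ s * nu n `^ s.
  rewrite -powRM //; last by apply: ltW; apply: nu_gt0.
  apply: ge0_ler_powR; rewrite ?ltW //.
    by rewrite nnegrE; apply: ltW; apply: nu_gt0.
  by rewrite nnegrE mulr_ge0 // ltW // nu_gt0.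
rewrite !powRN.
set A := (N%:R + 1) `^ s in YX *; set X := nu n `^ s in YX *.
set Y := nu m `^ s in Y0 YX *; set P := nu n `^ r.
have P0 : 0 < P by rewrite powR_gt0 ?nu_gt0.
have -> : 2 * A * (X / P) * Y^-1 = (P^-1 *+ 2) * (A * X / Y).
  by rewrite mulr2n; ring.
apply: ler_peMr; first by rewrite mulrn_wge0 // invr_ge0 ltW.
by rewrite ler_pdivlMr // mul1r.
Qed.

Lemma series_EFin (u : nat -> R) : cvgn (series u) ->
  (\sum_(0 <= k <oo) (u k)%:E = (limn (series u))%:E)%E.
Proof.
move=> cu; rewrite -EFin_lim//; apply/congr_lim/funext => n.
by rewrite /series /= sumEFin.
Qed.

Lemma core (N : nat) (r s : R) : 0 < s -> 2 * s < r ->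
  cvgn (series (fun n => nu n `^ (- s))) ->
  (@lebesgue_measure R).-negligible
     [set x : R | `|x| <= N%:R /\ infinite_set (pairs r x)].
Proof.
move=> s0 srs cu.
have r0 : 0 <= r by lra.
pose J n m := [set` `[(- N%:R), N%:R]%R] `&` ball (nu m / nu n)%R (nu n `^ (- r))%R.
pose T n := \bigcup_m J n m.
pose B := \bigcap_K \bigcup_(n in ~` `I_K) T n.
have mJ n m : measurable (J n m).
  by apply: measurableI => //; apply: measurable_realfun.measurable_ball.
have mT n : measurable (T n) by apply: bigcupT_measurable => m; exact: mJ.
have mB : measurable B.
  by apply: bigcapT_measurable => K; apply: bigcup_measurable => n _; exact: mT.
pose L := limn (series (fun n => nu n `^ (- s))).
pose c := 2 * (N%:R + 1) `^ s.
have c0 : 0 <= c by rewrite mulr_ge0 ?powR_ge0.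
have L0 : 0 <= L.
  rewrite -lee_fin -series_EFin //; apply: nneseries_ge0 => k _ _.
  by rewrite lee_fin powR_ge0.
pose f n := (c * L * nu n `^ (s - r))%:E.
have f0 n : (0 <= f n)%E by rewrite lee_fin !mulr_ge0 ?powR_ge0.
have hT n : (lebesgue_measure (T n) <= f n)%E.
  apply: le_trans (@measure_sigma_subadditive_tail _ R _ lebesgue_measure (T n) (J n) 0 (mJ n) (mT n) _) _.
    by move=> x [m _ Jx]; exists m.
  apply: le_trans (lee_nneseries
     (v := fun m => ((c * nu n `^ (s - r)) * nu m `^ (- s))%:E) _ _) _.
  - by move=> m _ _; exact: measure_ge0.
  - by move=> m _; exact: Jbound.
  rewrite (eq_eseriesr (g := fun m => ((c * nu n `^ (s-r))%:E * (nu m `^ (-s))%:E)%E));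
    last by move=> m _; rewrite EFinM.
  rewrite nneseriesZl; last by move=> m _; rewrite lee_fin powR_ge0.
  by rewrite series_EFin // -EFinM /f lee_fin mulrAC.
have hB K : (lebesgue_measure B <= \sum_(K <= n <oo) f n)%E.
  apply: le_trans (@measure_sigma_subadditive_tail _ R _ lebesgue_measure B T K mT mB _) _.
    by move=> x Bx; exact: Bx K I.
  by apply: lee_nneseries => [n _ _|n _]; [exact: measure_ge0|exact: hT].
have fin : (\sum_(0 <= k <oo) f k < +oo)%E.
  apply: le_lt_trans (lee_nneseries (v := fun k => ((c * L) * nu k `^ (- s))%:E) _ _) _.
  - by move=> k _ _; exact: f0.
  - move=> k _; rewrite lee_fin ler_wpM2l ?mulr_ge0 //.
    by apply: ler_powR; [exact: hnu1|lra].
  rewrite (eq_eseriesr (g := fun k => ((c * L)%:E * (nu k `^ (-s))%:E)%E));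
    last by move=> k _; rewrite EFinM.
  rewrite nneseriesZl; last by move=> k _; rewrite lee_fin powR_ge0.
  by rewrite series_EFin // -EFinM ltry.
have tail := nneseries_tail_cvg fin (fun k _ => f0 k).
exists B; split => //.
  apply/eqP; rewrite eq_le measure_ge0 andbT.
  rewrite -(cvg_lim _ tail) //; apply: lime_ge.
    by apply/cvg_ex; eexists; exact: tail.
  by apply: nearW => K; exact: hB.
move=> x [xN inf] K _.
apply: contrapT => hK; apply: inf.
have [j hj] := hunb ((N%:R + 1) * nu K).
apply: (@sub_finite_set _ _ (`I_j `*` `I_K)); last first.
  exact: finite_setX (finite_II j) (finite_II K).
move=> [m n] /= hmn.
have nK : (n < K)%N.
  rewrite ltnNge; apply/negP => Kn; apply: hK; exists n.
    by rewrite /=; apply/negP; rewrite -leqNgt.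
  exists m => //; split.
    by rewrite /= in_itv /=; move: xN; rewrite ler_norml.
  by rewrite /ball /= distrC.
split => //=.
rewrite ltnNge; apply/negP => jm.
have h0 := hj m jm.
have h1 := @near_bound N%:R r x m n r0 xN hmn.
have h3 : (N%:R + 1) * nu n <= (N%:R + 1) * nu K.
  by rewrite ler_wpM2l ?addr_ge0 // ltW // hinc.
lra.
Qed.

End core.

Theorem proposition3p1 (R : realType) (q nu : nat -> R) :
  is_beurling_primes q ->
  lists_increasingly nu (beurling_integers q) ->
  (abscissa_conv nu < +oo)%E ->
  {ae (@lebesgue_measure R), forall x : R,
     (q_irr_measure nu x <= 2%:E * abscissa_conv nu)%E}.
Proof.
move=> hq hnu hsig.
have hnu1 := @nu_ge1 R q nu hq hnu.
have hunb := @nu_unbounded R q nu hq hnu.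
have hinc := hnu.1.
have Spos : forall s, cvgn (series (fun n => nu n `^ (- s))) -> 0 < s.
  move=> s cs; rewrite ltNge; apply/negP => s0.
  have c0 := cvg_series_cvg_0 cs.
  have : 1 <= limn (fun n => nu n `^ (- s)).
    apply: limr_ge; first by apply/cvg_ex; eexists; exact: c0.
    apply: nearW => n; rewrite -(powRr0 (nu n)); apply: ler_powR => //.
    by rewrite oppr_ge0.
  by rewrite (cvg_lim _ c0) // ler10.
have sig0 : (0 <= abscissa_conv nu)%E.
  by apply/ereal_infP => _ [s Ss <-]; rewrite lee_fin ltW // Spos.
have sfin : abscissa_conv nu \is a fin_num by rewrite ge0_fin_numE.
set sg := fine (abscissa_conv nu).
have sgE : abscissa_conv nu = sg%:E by rewrite fineK.
have sg0 : 0 <= sg by rewrite -lee_fin -sgE.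
pose rk (k : nat) := 2 * sg + (k.+1%:R)^-1.
have rk0 k : 0 < rk k by rewrite /rk ltr_wpDl ?mulr_ge0.
pose E k := \bigcup_(N : nat) [set x : R | `|x| <= N%:R /\
               infinite_set (@pairs R nu (rk k) x)].
have negE : forall k, (@lebesgue_measure R).-negligible (E k).
  move=> k; apply: negligible_bigcup => N.
  have hk : (abscissa_conv nu < (sg + (k.+1%:R)^-1 / 2)%:E)%E.
    by rewrite sgE lte_fin ltrDl divr_gt0.
  have [_ [s Ss <-] ss] := ereal_inf_lt hk.
  apply: (@core R nu hnu1 hinc hunb N (rk k) s) => //.
  - exact: Spos.
  - move: ss; rewrite lte_fin /rk => ss.
    have -> : 2 * sg + k.+1%:R^-1 = 2 * (sg + k.+1%:R^-1 / 2) by field.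
    by rewrite ltr_pM2l.
apply: (negligibleS _ (negligible_bigcup negE)).
move=> x /= nP; apply: contrapT => hx; apply: nP.
rewrite sgE -EFinM; apply/lee_addgt0Pr => e e0.
have ei0 : 0 <= e^-1 by rewrite invr_ge0 ltW.
pose k := Num.Def.archi_bound e^-1.
have hk : (k.+1%:R)^-1 < e.
  rewrite invf_plt ?posrE //.
  by apply: (lt_le_trans (archi_boundP ei0)); rewrite ler_nat.
apply: (@le_trans _ _ (rk k)%:E).
  apply: ereal_inf_lbound; exists (rk k) => //; split; first exact: rk0.
  apply: contrapT => inf; apply: hx; exists k => //.
  exists (Num.Def.archi_bound `|x|) => //; split => //.
  exact: ltW (archi_boundP (normr_ge0 x)).
by rewrite lee_fin /rk lerD2l ltW.
Qed.
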